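(* In the motivic Steenrod algebra (over an algebraically closed field of characteristic 0), let $P^RP^S=\sum_X\tau^{u(X)}b(X)P^{T(X)}$ be the Milnor product formula. If for a Milnor matrix $X$ one has $b(X)=1$ and $v(T(X))=v(R)+v(S)$, then $u(X)=0$.
   Context: $\mathbb{M}_2=\mathbb{F}_2[\tau]$, $\tau$ of bidegree $(0,1)$. The Milnor basis of the motivic Steenrod algebra $A$ over $\mathbb{M}_2$ consists of $P^R$ for finite sequences $R=(r_1,r_2,\dots)$ of nonnegative integers, with $P^R$ of bidegree $\big(\sum r_i(2^i-1),\sum\lfloor r_i(2^i-1)/2\rfloor\big)$. The Milnor product formula: $X=(x_{ij})_{i,j\ge0}$ ranges over matrices of nonnegative integers ($x_{00}$ ignored) with $\sum_j2^jx_{ij}=r_i$ for $i\ge1$ and $\sum_ix_{ij}=s_j$ for $j\ge1$; $T(X)=(t_1,t_2,\dots)$ with $t_n=\sum_{i+j=n}x_{ij}$; $b(X)\in\mathbb{F}_2$ is the product over $n$ of the multinomial coefficients $t_n!/\prod_{i+j=n}x_{ij}!$ mod 2; and $u(X)\ge0$ is the integer forced by homogeneity, namely $u(X)=C(P^R)+C(P^S)-C(P^{T(X)})$, where the Chow weight of an element of bidegree $(p,q)$ is $C=2q-p$. For $R=(r_1,r_2,\dots)$ with 2-adic expansions $r_i=\sum_ka_{ik}2^k$, set $v(R)=\sum_{i,k}i\,a_{ik}$. *)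

(* Defs.v *)
From mathcomp Require Import all_boot all_order all_algebra.
Set Implicit Arguments. Unset Strict Implicit. Unset Printing Implicit Defensive.
Import GRing.Theory Num.Theory.

(* A Milnor-basis index R = (r_1, r_2, ...) is a finite sequence [:: r_1; r_2; ...]
   (entry at position k is r_{k+1}; implicit zeros beyond its size). *)
Definition ridx (R : seq nat) (i : nat) : nat := nth 0 R i.-1.

(* Bidegree (p, q) of P^R. *)
Definition topdeg (R : seq nat) : nat :=
  \sum_(k < size R) nth 0 R k * (2 ^ k.+1 - 1).
Definition wtdeg (R : seq nat) : nat :=
  \sum_(k < size R) (nth 0 R k * (2 ^ k.+1 - 1)) %/ 2.

Definition chow (R : seq nat) : int := (2 * wtdeg R)%:Z - (topdeg R)%:Z.

Definition bit (r k : nat) : nat := odd (r %/ 2 ^ k).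
Definition vfun (R : seq nat) : nat :=
  \sum_(k < size R) k.+1 * \sum_(l < (nth 0 R k).+1) bit (nth 0 R k) l.

Definition supported (N : nat) (X : nat -> nat -> nat) : Prop :=
  forall i j, N < i \/ N < j -> X i j = 0.

(* X is a Milnor matrix for the product P^R P^S (x_00 is ignored). *)
Definition milnor_matrix (N : nat) (X : nat -> nat -> nat) (R S : seq nat) : Prop :=
  supported N X /\
  (forall i, 1 <= i -> \sum_(j < N.+1) 2 ^ j * X i j = ridx R i) /\
  (forall j, 1 <= j -> \sum_(i < N.+1) X i j = ridx S j).

Definition tn (X : nat -> nat -> nat) (n : nat) : nat :=
  \sum_(i < n.+1) X i (n - i).

(* T(X) = (t_1, ..., t_{2N}); all further t_n vanish. *)
Definition Tseq (N : nat) (X : nat -> nat -> nat) : seq nat :=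
  mkseq (fun k => tn X k.+1) (2 * N).

(* b(X) in F_2 (as 0 or 1): product of multinomials t_n! / prod_{i+j=n} x_{ij}! mod 2. *)
Definition bcoef (N : nat) (X : nat -> nat -> nat) : nat :=
  (\prod_(1 <= n < (2 * N).+1)
      ((tn X n)`! %/ \prod_(i < n.+1) (X i (n - i))`!)) %% 2.

Definition uexp (N : nat) (X : nat -> nat -> nat) (R S : seq nat) : int :=
  chow R + chow S - chow (Tseq N X).

(* Main.v *)
Require Import Defs.
From mathcomp Require Import all_boot all_order all_algebra.
Import GRing.Theory Num.Theory.
From Stdlib Require Import Lia.
Ltac nlia := repeat match goal with H : is_true (_ <= _) |- _ => apply (elimT leP) in H end;
  try apply/leP; repeat rewrite <- addnn in *; try rewrite <- plusE in *; try rewrite <- minusE in *; try rewrite <- multE in *; lia.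

Fixpoint pcf (f n : nat) : nat :=
  match f with 0 => 0 | f'.+1 => odd n + pcf f' n./2 end.
Definition pc n := pcf n n.

Lemma pcf_stable K n m : n < 2 ^ K -> pcf (K + m) n = pcf K n.
Proof.
elim: K n => [|K IH] n /=.
  rewrite expn0 ltnS leqn0 => /eqP ->; by elim: m.
move=> Hn; rewrite IH //.
rewrite -(ltn_pmul2l (isT : 0 < 2)) -expnS (leq_ltn_trans _ Hn) //.
by rewrite mul2n -{2}(odd_double_half n) leq_addl.
Qed.

Lemma pcf_eq K n : n < 2 ^ K -> pcf K n = pc n.
Proof.
move=> H; rewrite /pc.
case: (leqP K n) => Kn.
  by move: (@pcf_stable K n (n - K) H); rewrite subnKC // => <-.
by move: (@pcf_stable n n (K - n) (ltn_expl n (isT : 1 < 2))); rewrite subnKC ?(ltnW Kn).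
Qed.

Lemma pc0 : pc 0 = 0. Proof. by []. Qed.

Lemma pcE n : pc n = odd n + pc n./2.
Proof.
case: n => [|n]; first by [].
rewrite /pc /=; congr (_ + _).
apply: pcf_eq.
apply: leq_trans (ltn_expl n (isT : 1 < 2)).
have := odd_double_half n.+1; rewrite -addnn.
case: (odd n.+1) => /= /eqP; rewrite -!plusE => /eqP H; apply/ltP; lia.
Qed.

Lemma pc_bit (b : bool) m : pc (b + m.*2) = b + pc m.
Proof. by rewrite pcE half_bit_double oddD odd_double addbF oddb. Qed.

Lemma pc_double m : pc m.*2 = pc m.
Proof. by rewrite -[m.*2]add0n -[0]/(nat_of_bool false) pc_bit. Qed.

Lemma pc_exp j x : pc (2 ^ j * x) = pc x.
Proof. by elim: j => [|j IH]; rewrite ?mul1n // expnS -mulnA mul2n pc_double. Qed.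

Lemma pc1 : pc 1 = 1. Proof. by []. Qed.

Lemma pc_add a b : pc (a + b) + (odd a && odd b) <= pc a + pc b.
Proof.
move: {2}(a + b) (leqnn (a + b)) => n; elim: n a b => [|n IH] a b.
  by rewrite leqn0 addn_eq0 => /andP[/eqP-> /eqP->].
move=> Hab.
have [oa [a' Ea]] : exists (oa : bool) a', a = oa + a'.*2.
  by exists (odd a), a./2; rewrite odd_double_half.
have [ob [b' Eb]] : exists (ob : bool) b', b = ob + b'.*2.
  by exists (odd b), b./2; rewrite odd_double_half.
subst a b.
have E : oa + a'.*2 + (ob + b'.*2) = oa + ob + (a' + b').*2.
  by rewrite doubleD addnACA.
rewrite E !pc_bit !oddD !odd_double !addbF !oddb.
have L2 : a' + b' <= n by move: Hab; clear E; case: oa; case: ob => /= Hab; nlia.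
have B := IH a' b' L2.
have F0 : forall c : bool, pc (c + (a' + b').*2) = c + pc (a' + b') by move=> c; rewrite pc_bit.
case: oa E Hab; case: ob => E /= Hab.
- have E2 : 1 + 1 + (a' + b').*2 = (a' + b' + 1).*2.
    by rewrite -!addnn -!plusE /=; lia.
  rewrite [X in pc X]E2 pc_double /=.
  have L1 : a' + b' + 1 <= n by nlia.
  have H1 := IH (a' + b') 1 L1.
  rewrite pc1 in H1.
  nlia.
- rewrite addn0 (F0 true) /=.
  nlia.
- rewrite add0n (F0 true) /=.
  nlia.
- rewrite !add0n pc_double.
  nlia.
Qed.

Lemma half_lt n : 0 < n -> n./2 < n.
Proof. move=> H; have := odd_double_half n; case: (odd n) => /= E; nlia. Qed.

Lemma pc_le n : pc n <= n.
Proof.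
move: {2}n (leqnn n) => k; elim: k n => [|k IH] n.
  by rewrite leqn0 => /eqP ->.
move=> Hn; case: n Hn => [|n] Hn; first by [].
rewrite pcE.
have H1 := @half_lt n.+1 (ltn0Sn n).
have H2 : n.+1./2 <= k by nlia.
have H3 := IH (n.+1./2) H2.
apply: (leq_trans (leq_add (leqnn _) H3)).
have E := odd_double_half n.+1; rewrite -addnn addnA in E.
by rewrite -[X in _ <= X]E leq_addr.
Qed.

Lemma pc_succ n : pc n.+1 + logn 2 n.+1 = pc n + 1.
Proof.
move: {2}n (leqnn n) => k; elim: k n => [|k IH] n.
  by rewrite leqn0 => /eqP ->.
move=> Hn.
have [b [m Em]] : exists (b : bool) m, n = b + m.*2.
  by exists (odd n), n./2; rewrite odd_double_half.
subst n; case: b Hn => /= Hn.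
- have E1 : (m.*2).+2 = (m.+1).*2 by rewrite doubleS.
  rewrite E1 pc_double.
  have -> : 1 + m.*2 = true + m.*2 by [].
  rewrite pc_bit.
  rewrite lognE /= -mul2n mulKn // (_ : 2 %| 2 * m.+1) ?dvdn_mulr //=.
  have Hm : m <= k by nlia.
  have := IH m Hm; nlia.
- have -> : (0 + m.*2).+1 = true + m.*2 by rewrite add0n.
  rewrite pc_bit add0n pc_double lognE /=.
  rewrite dvdn2 oddD odd_double /= addn0 addnC.
  done.
Qed.

Lemma legendre n : logn 2 n`! + pc n = n.
Proof.
elim: n => [|n IH]; first by [].
rewrite factS lognM ?fact_gt0 //.
have := pc_succ n; nlia.
Qed.

Lemma bitsum K r : \sum_(l < K) bit r l = pcf K r.
Proof.
elim: K r => [|K IH] r; first by rewrite big_ord0.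
rewrite big_ord_recl /= -IH /bit expn0 divn1; congr (_ + _).
by apply: eq_bigr => i _; rewrite expnS divnMA divn2.
Qed.

Lemma popE r : \sum_(l < r.+1) bit r l = pc r.
Proof. by rewrite bitsum pcf_eq // ltnW // ltn_expl. Qed.

Lemma fact_prod_dvd K (a : nat -> nat) :
  \prod_(k < K) (a k)`! %| (\sum_(k < K) a k)`!.
Proof.
elim: K => [|K IH]; first by rewrite !big_ord0.
rewrite !big_ord_recr /=.
set s := \sum_(i < K) a i.
rewrite -(bin_fact (leq_addr (a K) s)) addKn.
exact: dvdn_mull (dvdn_mul IH (dvdnn _)).
Qed.

Lemma logn_prod K (a : nat -> nat) : (forall k, 0 < a k) ->
  logn 2 (\prod_(k < K) a k) = \sum_(k < K) logn 2 (a k).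
Proof.
move=> Ha; elim: K => [|K IH]; first by rewrite !big_ord0.
by rewrite !big_ord_recr /= lognM ?IH // prodn_gt0.
Qed.

Lemma mult_pc K (a : nat -> nat) :
  odd ((\sum_(k < K) a k)`! %/ \prod_(k < K) (a k)`!) ->
  pc (\sum_(k < K) a k) = \sum_(k < K) pc (a k).
Proof.
set t := \sum_(k < K) a k; set P := \prod_(k < K) (a k)`!.
move=> Hodd.
have HD : P %| t`! := fact_prod_dvd K a.
have L : logn 2 t`! = \sum_(k < K) logn 2 (a k)`!.
  have P0 : 0 < P by rewrite prodn_gt0 // => i; exact: fact_gt0.
  rewrite -(divnK HD) (lognM _ (odd_gt0 Hodd) P0).
  rewrite /P (@logn_prod K (fun k => (a k)`!)); last by move=> i; exact: fact_gt0.
  by rewrite [logn 2 _]lognE dvdn2 Hodd /= andbF.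
have L2 : \sum_(k < K) logn 2 (a k)`! + \sum_(k < K) pc (a k) = t.
  by rewrite -big_split /=; apply: eq_bigr => i _; rewrite legendre.
have L3 := legendre t.
apply/eqP; rewrite -(eqn_add2l (logn 2 t`!)) L3 L L2 //.
Qed.

Lemma odd_sum K (a : nat -> nat) :
  odd (\sum_(k < K) a k) = odd (\sum_(k < K) odd (a k)).
Proof.
elim: K => [|K IH]; first by rewrite !big_ord0.
by rewrite !big_ord_recr /= !oddD IH oddb.
Qed.

Lemma pc_sum K (a : nat -> nat) :
  pc (\sum_(k < K) a k) + (1 < \sum_(k < K) odd (a k)) <= \sum_(k < K) pc (a k).
Proof.
elim: K => [|K IH]; first by rewrite !big_ord0.
rewrite !big_ord_recr /=.
have H := pc_add (\sum_(i < K) a i) (a K).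
rewrite odd_sum in H.
move: IH H; move: (\sum_(i < K) a i) (\sum_(i < K) odd (a i)) (\sum_(i < K) pc (a i)) => S c P.
case: (odd (a K)) => /=; case: c => [|[|c]] /=; rewrite ?andbF ?andbT /= => A B; nlia.
Qed.

Lemma odd_sum_le1 K (a : nat -> nat) : \sum_(k < K) odd (a k) <= 1 ->
  odd (\sum_(k < K) a k) = \sum_(k < K) odd (a k) :> nat.
Proof.
rewrite odd_sum; move: (\sum_(k < K) odd (a k)) => c.
by case: c => [|[|c]].
Qed.



Lemma sum_ext0 A B (f : nat -> nat) : A <= B ->
  (forall k, A <= k -> k < B -> f k = 0) -> \sum_(k < A) f k = \sum_(k < B) f k.
Proof.
move=> AB H; rewrite -!(big_mkord xpredT f) (big_cat_nat (leq0n A) AB) /=.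
rewrite [X in _ = _ + X]big1_seq ?addn0 // => k /andP[_].
by rewrite mem_index_iota => /andP[]; exact: H.
Qed.

Lemma seq_sum (F : nat -> nat -> nat) R M : (forall k, F k 0 = 0) ->
  (forall k, M <= k -> nth 0 R k = 0) ->
  \sum_(k < size R) F k (nth 0 R k) = \sum_(k < M) F k (nth 0 R k).
Proof.
move=> F0 HM.
rewrite (@sum_ext0 (size R) (maxn (size R) M) (fun k => F k (nth 0 R k))) ?leq_maxl //; last first.
  by move=> k Hk _; rewrite nth_default.
rewrite [RHS](@sum_ext0 M (maxn (size R) M) (fun k => F k (nth 0 R k))) ?leq_maxr //.
by move=> k Hk _; rewrite HM.
Qed.

Lemma sum_recl (F : nat -> nat) n : \sum_(i < n.+1) F i = F 0 + \sum_(i < n) F i.+1.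
Proof. by rewrite big_ord_recl. Qed.

Lemma tri (f : nat -> nat -> nat) K :
  \sum_(n < K) \sum_(i < n.+1) f i (n - i) = \sum_(i < K) \sum_(j < K - i) f i j.
Proof.
elim: K => [|K IH]; first by rewrite !big_ord0.
rewrite big_ord_recr /= IH.
rewrite [RHS](eq_bigr (fun i : 'I_K.+1 => \sum_(j < K - i) f i j + f i (K - i))); last first.
  move=> i _; have Hi : i <= K by rewrite -ltnS.
  rewrite -!(big_mkord xpredT) (subSn Hi) big_nat_recr //=.
rewrite big_split /= [X in _ = X + _]big_ord_recr /= subnn big_ord0 addn0.
done.
Qed.

Lemma square (f : nat -> nat -> nat) N :
  (forall i j, N < i \/ N < j -> f i j = 0) ->
  \sum_(n < (2 * N).+1) \sum_(i < n.+1) f i (n - i) =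
  \sum_(i < N.+1) \sum_(j < N.+1) f i j.
Proof.
move=> Hf; rewrite tri.
rewrite [RHS](@sum_ext0 N.+1 (2 * N).+1 (fun i => \sum_(j < N.+1) f i j)); last first.
- move=> k Hk _; rewrite big1 // => j _; apply: Hf; by left.
- by rewrite ltnS mul2n -addnn leq_addl.
apply: eq_bigr => i _.
case: (leqP i N) => Hi.
  have Hb : N.+1 <= (2 * N).+1 - i by move: (nat_of_ord i) Hi => m Hm; clear -Hm; nlia.
  rewrite [RHS](@sum_ext0 N.+1 _ (fun j => f i j) Hb) // => k Hk _; apply: Hf; by right.
by rewrite !big1 // => j _; apply: Hf; left.
Qed.

Definition odds (R : seq nat) := \sum_(k < size R) odd (nth 0 R k).

Lemma topE R : topdeg R = 2 * wtdeg R + odds R.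
Proof.
rewrite /topdeg /wtdeg /odds big_distrr -big_split /=; apply: eq_bigr => k _.
set r := nth 0 R k.
have Hodd : odd (r * (2 ^ k.+1 - 1)) = odd r.
  by rewrite oddM oddB ?expn_gt0 // oddX /= andbT.
by rewrite -Hodd -modn2 [2 * _]mulnC -divn_eq.
Qed.

Lemma chowE R : chow R = (- (odds R)%:Z)%R.
Proof. by rewrite /chow topE PoszD opprD addrA subrr add0r. Qed.

Lemma odd_prod_seq (r : seq nat) (F : nat -> nat) :
  odd (\prod_(i <- r) F i) -> forall i, i \in r -> odd (F i).
Proof.
elim: r => [|a r IH] //=; rewrite big_cons oddM => /andP[Ha Hr] i.
by rewrite in_cons => /orP[/eqP->|/IH]; [|apply].
Qed.

Theorem mainTheorem7 (R S : seq nat) (N : nat) (X : nat -> nat -> nat) :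
  milnor_matrix N X R S ->
  bcoef N X = 1 ->
  vfun (Tseq N X) = vfun R + vfun S ->
  uexp N X R S = 0%R.
Proof.
move=> [Hsup [HR HS]] Hb Hv.
have X0 : forall i j, N < i \/ N < j -> X i j = 0 := Hsup.
have Hdiag : forall n, 0 < n -> n <= 2 * N ->
    pc (tn X n) = \sum_(i < n.+1) pc (X i (n - i)).
  move=> n n0 nN.
  rewrite /bcoef modn2 in Hb.
  have Ho : odd (\prod_(1 <= n < (2 * N).+1)
      ((tn X n)`! %/ \prod_(i < n.+1) (X i (n - i))`!)) by case: odd Hb.
  have Hn : n \in index_iota 1 (2 * N).+1 by rewrite mem_index_iota n0 ltnS nN.
  have H := odd_prod_seq _ _ Ho n Hn.
  exact: (@mult_pc n.+1 (fun i => X i (n - i))).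
have Hdiag_odd : forall n, 0 < n -> n <= 2 * N ->
    odd (tn X n) = \sum_(i < n.+1) odd (X i (n - i)) :> nat.
  move=> n n0 nN; have E := Hdiag n n0 nN.
  have := pc_sum n.+1 (fun i => X i (n - i)).
  rewrite -/(tn X n) E -[X in _ <= X]addn0 leq_add2l leqn0 => /eqP H.
  apply: (odd_sum_le1 n.+1 (fun i => X i (n - i))); move: H; case: ltnP => //.
have Hrow : forall i, 0 < i -> pc (ridx R i) <= \sum_(j < N.+1) pc (X i j).
  move=> i i0; rewrite -HR //.
  have H := pc_sum N.+1 (fun j => 2 ^ j * X i j).
  apply: leq_trans (leq_trans (leq_addr _ _) H) (eq_leq _).
  apply: eq_bigr => j _; exact: pc_exp.
have Hrow_odd : forall i, 0 < i -> odd (ridx R i) = odd (X i 0).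
  move=> i i0; rewrite -HR // (odd_sum N.+1 (fun j => 2 ^ j * X i j)) (sum_recl (fun j => odd (2 ^ j * X i j))) big1 ?addn0 /=.
    by rewrite expn0 mul1n oddb.
  by move=> j _; rewrite oddM oddX.
have Hcol : forall j, 0 < j -> pc (ridx S j) + (1 < \sum_(i < N.+1) odd (X i j))
      <= \sum_(i < N.+1) pc (X i j).
  by move=> j j0; rewrite -HS //; exact: (pc_sum N.+1 (fun i => X i j)).
have RN : forall k, N <= k -> nth 0 R k = 0.
  move=> k Hk; have := HR k.+1 (ltn0Sn k); rewrite /ridx /= => <-.
  by apply: big1 => j _; rewrite X0 ?muln0 //; left; rewrite ltnS.
have SN : forall k, N <= k -> nth 0 S k = 0.
  move=> k Hk; have := HS k.+1 (ltn0Sn k); rewrite /ridx /= => <-.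
  by apply: big1 => j _; apply: X0; right; rewrite ltnS.
have vR : vfun R = \sum_(k < N) k.+1 * pc (ridx R k.+1).
  rewrite /vfun (eq_bigr (fun k : 'I_(size R) => k.+1 * pc (nth 0 R k))); last by move=> k _; rewrite popE.
  exact: (seq_sum (fun k r => k.+1 * pc r) R N (fun k => muln0 _) RN).
have vS : vfun S = \sum_(k < N) k.+1 * pc (ridx S k.+1).
  rewrite /vfun (eq_bigr (fun k : 'I_(size S) => k.+1 * pc (nth 0 S k))); last by move=> k _; rewrite popE.
  exact: (seq_sum (fun k r => k.+1 * pc r) S N (fun k => muln0 _) SN).
have vT : vfun (Tseq N X) = \sum_(k < 2 * N) k.+1 * pc (tn X k.+1).
  rewrite /vfun /Tseq size_mkseq; apply: eq_bigr => k _; rewrite popE nth_mkseq //.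
set A := \sum_(i < N.+1) i * \sum_(j < N.+1) pc (X i j).
set B := \sum_(j < N.+1) j * \sum_(i < N.+1) pc (X i j).
have vTAB : vfun (Tseq N X) = A + B.
  rewrite vT.
  transitivity (\sum_(n < (2 * N).+1) \sum_(i < n.+1) (i + (n - i)) * pc (X i (n - i))).
    rewrite (sum_recl (fun n => \sum_(i < n.+1) (i + (n - i)) * pc (X i (n - i)))).
    rewrite big_ord1 /= ?sub0n ?add0n ?mul0n ?add0n.
    apply: eq_bigr => k _.
    rewrite Hdiag // big_distrr /=; apply: eq_bigr => i _; rewrite subnKC // -ltnS; exact: ltn_ord.
  have Hf : forall i j, N < i \/ N < j -> (i + j) * pc (X i j) = 0.
    by move=> a b H; rewrite X0 // muln0.
  have Sq := square (fun i j => (i + j) * pc (X i j)) N Hf.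
  cbv beta in Sq; rewrite Sq.
  have EB : B = \sum_(i < N.+1) \sum_(j < N.+1) j * pc (X i j).
    by rewrite exchange_big /B; apply: eq_bigr => j _; rewrite big_distrr.
  have EA : A = \sum_(i < N.+1) \sum_(j < N.+1) i * pc (X i j).
    by rewrite /A; apply: eq_bigr => i _; rewrite big_distrr.
  rewrite EA EB -big_split /=; apply: eq_bigr => i _.
  by rewrite -big_split /=; apply: eq_bigr => j _; rewrite mulnDl.
have HA : vfun R <= A.
  rewrite vR /A (sum_recl (fun i => i * \sum_(j < N.+1) pc (X i j))) mul0n add0n.
  by apply: leq_sum => k _; rewrite leq_mul2l Hrow ?orbT.
have HB : vfun S + \sum_(k < N) k.+1 * (1 < \sum_(i < N.+1) odd (X i k.+1)) <= B.
  rewrite vS -big_split /B (sum_recl (fun j => j * \sum_(i < N.+1) pc (X i j))) mul0n add0n /=.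
  by apply: leq_sum => k _; rewrite -mulnDr leq_mul2l Hcol ?orbT.
have E0 : \sum_(k < N) k.+1 * (1 < \sum_(i < N.+1) odd (X i k.+1)) = 0.
  have H : vfun R + vfun S + \sum_(k < N) k.+1 * (1 < \sum_(i < N.+1) odd (X i k.+1))
      <= vfun R + vfun S.
    by rewrite -addnA; apply: leq_trans (leq_add HA HB) _; rewrite -vTAB Hv.
  by move: H; rewrite -[X in _ <= X]addn0 leq_add2l leqn0 => /eqP.
have Hc1 : forall k, k < N -> \sum_(i < N.+1) odd (X i k.+1) <= 1.
  move=> k kN; move: E0; rewrite (bigD1 (Ordinal kN)) //= => /eqP.
  rewrite addn_eq0 muln_eq0 /= => /andP[/eqP H _].
  by rewrite leqNgt; apply/negP => H'; rewrite H' in H.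
have oT : odds (Tseq N X) = \sum_(k < 2 * N) odd (tn X k.+1).
  by rewrite /odds /Tseq size_mkseq; apply: eq_bigr => k _; rewrite nth_mkseq.
have oR : odds R = \sum_(k < N) odd (X k.+1 0).
  rewrite /odds (seq_sum (fun k r => nat_of_bool (odd r)) R N (fun k => erefl) RN).
  apply: eq_bigr => k _; have := Hrow_odd k.+1 (ltn0Sn k); rewrite /ridx /= => ->.
  done.
have oS : odds S = \sum_(k < N) \sum_(i < N.+1) odd (X i k.+1).
  rewrite /odds (seq_sum (fun k r => nat_of_bool (odd r)) S N (fun k => erefl) SN).
  apply: eq_bigr => k _; have := HS k.+1 (ltn0Sn k); rewrite /ridx /= => <-.
  apply: (odd_sum_le1 N.+1 (fun i => X i k.+1)); exact: Hc1.
have Hfo : forall i j, N < i \/ N < j -> nat_of_bool (odd (X i j)) = 0.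
  by move=> a b H; rewrite X0.
have Sq := square (fun i j => nat_of_bool (odd (X i j))) N Hfo.
cbv beta in Sq.
have oTQ : odd (X 0 0) + odds (Tseq N X) = \sum_(i < N.+1) \sum_(j < N.+1) odd (X i j).
  rewrite -Sq oT (sum_recl (fun n => \sum_(i < n.+1) nat_of_bool (odd (X i (n - i))))).
  rewrite big_ord1 /=; congr (_ + _).
  apply: eq_bigr => k _; rewrite Hdiag_odd //.
have QE : \sum_(i < N.+1) \sum_(j < N.+1) nat_of_bool (odd (X i j))
    = odd (X 0 0) + odds R + odds S.
  rewrite oR oS (eq_bigr (fun i : 'I_N.+1 => odd (X i 0) + \sum_(k < N) odd (X i k.+1))); last first.
    by move=> i _; rewrite (sum_recl (fun j => nat_of_bool (odd (X i j)))).
  rewrite big_split /= (sum_recl (fun i => nat_of_bool (odd (X i 0)))) exchange_big /=.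
  done.
have OE : odds (Tseq N X) = odds R + odds S.
  by apply/eqP; rewrite -(eqn_add2l (odd (X 0 0))) addnA oTQ QE.
by rewrite /uexp !chowE OE PoszD opprK -opprD addNr.
Qed.
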